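(* Let $\Gamma\subseteq\mathbb R^n$ be an open convex set, $S\subseteq\Gamma$ a nonempty convex set, and $f:\Gamma\to\mathbb R$ a continuously differentiable function that is quasiconvex on $\Gamma$. Let $\bar S=\arg\min\{f(x)\mid x\in S\}$, and suppose $\bar x\in\bar S$ with $\nabla f(\bar x)=0$. Then $\nabla f(x)=0$ for all $x\in\bar S$. If in addition $f$ is pseudoconvex at every point $x\in S\setminus\bar S$, then $\bar S=\tilde S:=\{x\in S\mid \nabla f(x)=0\}$.
   Context: A function $f:\Gamma\to\mathbb R$ on a convex set $\Gamma$ is quasiconvex on $\Gamma$ iff $f(x+t(y-x))\le\max\{f(x),f(y)\}$ for all $x,y\in\Gamma$, $t\in[0,1]$. A differentiable function $f$ on the open set $\Gamma$ is pseudoconvex at $x\in\Gamma$ iff for every $y\in\Gamma$, $f(y)<f(x)$ implies $\nabla f(x)^T(y-x)<0$. *)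

(* Defs.v *)
From Stdlib Require Import Reals.
From mathcomp Require Import all_boot.
Set Implicit Arguments.
Unset Strict Implicit.
Unset Printing Implicit Defensive.

Open Scope R_scope.

Definition vec (n : nat) := 'I_n -> R.

Definition vzero {n} : vec n := fun _ => 0.
Definition vadd {n} (x y : vec n) : vec n := fun i => x i + y i.
Definition vsub {n} (x y : vec n) : vec n := fun i => x i - y i.
Definition vscale {n} (t : R) (x : vec n) : vec n := fun i => t * x i.

Definition dot {n} (x y : vec n) : R := \big[Rplus/0]_(i < n) (x i * y i).
Definition vnorm {n} (x : vec n) : R := sqrt (dot x x).

Definition vopen_set {n} (G : vec n -> Prop) : Prop :=
  forall x, G x -> exists eps, 0 < eps /\
    forall y, vnorm (vsub y x) < eps -> G y.

Definition vconvex_set {n} (G : vec n -> Prop) : Prop :=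
  forall x y t, G x -> G y -> 0 <= t <= 1 -> G (vadd x (vscale t (vsub y x))).

Definition has_gradient_at {n} (G : vec n -> Prop) (f : vec n -> R) (x g : vec n) : Prop :=
  forall eps, 0 < eps -> exists delta, 0 < delta /\
    forall y, G y -> vnorm (vsub y x) < delta ->
      Rabs (f y - f x - dot g (vsub y x)) <= eps * vnorm (vsub y x).

Definition C1_on {n} (G : vec n -> Prop) (f : vec n -> R) (gradf : vec n -> vec n) : Prop :=
  (forall x, G x -> has_gradient_at G f x (gradf x)) /\
  (forall x, G x -> forall eps, 0 < eps -> exists delta, 0 < delta /\
     forall y, G y -> vnorm (vsub y x) < delta -> vnorm (vsub (gradf y) (gradf x)) < eps).

Definition quasiconvex_on {n} (G : vec n -> Prop) (f : vec n -> R) : Prop :=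
  forall x y t, G x -> G y -> 0 <= t <= 1 ->
    f (vadd x (vscale t (vsub y x))) <= Rmax (f x) (f y).

Definition pseudoconvex_at {n} (G : vec n -> Prop) (f : vec n -> R)
    (gradf : vec n -> vec n) (x : vec n) : Prop :=
  forall y, G y -> f y < f x -> dot (gradf x) (vsub y x) < 0.

Definition argmin_set {n} (S : vec n -> Prop) (f : vec n -> R) (x : vec n) : Prop :=
  S x /\ forall y, S y -> f x <= f y.

(* Main.v *)
Require Import Defs.
From Stdlib Require Import Reals Lra Classical FunctionalExtensionality.
From HB Require Import structures.
From mathcomp Require Import all_boot.
Open Scope R_scope.
Set Implicit Arguments.

HB.instance Definition _ := Monoid.isComLaw.Build R 0 Rplus (fun a b c => esym (Rplus_assoc a b c)) Rplus_comm Rplus_0_l.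

Lemma dot_scale_r n (a b : vec n) s : dot a (vscale s b) = s * dot a b.
Proof.
rewrite /dot /vscale.
apply: (big_ind2 (fun u v => u = s * v)).
- by rewrite Rmult_0_r.
- by move=> x1 x2 y1 y2 -> ->; ring.
- by move=> i _; ring.
Qed.

Lemma dot_scale_l n (a b : vec n) s : dot (vscale s a) b = s * dot a b.
Proof.
rewrite /dot /vscale.
apply: (big_ind2 (fun u v => u = s * v)).
- by rewrite Rmult_0_r.
- by move=> x1 x2 y1 y2 -> ->; ring.
- by move=> i _; ring.
Qed.

Lemma dot_zero_l n (b : vec n) : dot vzero b = 0.
Proof.
rewrite /dot /vzero.
apply: (big_ind (fun u => u = 0)) => //.
- by move=> x y -> ->; ring.
- by move=> i _; ring.
Qed.

Lemma dot_ge0 n (g : vec n) : 0 <= dot g g.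
Proof.
rewrite /dot.
apply: (big_ind (fun u => 0 <= u)).
- lra.
- by move=> x y; lra.
- by move=> i _; apply: Rle_0_sqr.
Qed.

Lemma big_ge0 n (P : pred 'I_n) (g : vec n) : 0 <= \big[Rplus/0]_(j < n | P j) (g j * g j).
Proof.
apply: (big_ind (fun u => 0 <= u)).
- lra.
- by move=> x y; lra.
- by move=> j _; apply: Rle_0_sqr.
Qed.

Lemma dot_eq0 n (g : vec n) : dot g g = 0 -> g = vzero.
Proof.
move=> H; apply: functional_extensionality => i.
move: H; rewrite /dot (bigD1 i) //= => H.
have H3 := Rle_0_sqr (g i). rewrite /Rsqr in H3.
have H4 := Rplus_eq_0_l _ _ H3 (big_ge0 _ g) H.
rewrite /vzero. by case: (Rmult_integral _ _ H4).
Qed.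

Lemma vnorm_scale n (g : vec n) s : vnorm (vscale s g) = Rabs s * vnorm g.
Proof.
rewrite /vnorm dot_scale_l dot_scale_r -Rmult_assoc sqrt_mult_alt.
- by rewrite -sqrt_Rsqr_abs.
- apply: Rle_0_sqr.
Qed.

Lemma vnorm_ge0 n (g : vec n) : 0 <= vnorm g.
Proof. apply: sqrt_pos. Qed.

Lemma vnorm_eq0 n (g : vec n) : vnorm g = 0 -> g = vzero.
Proof. move=> H; apply: dot_eq0; apply: sqrt_eq_0 => //; apply: dot_ge0. Qed.

Lemma myabs_inv (x e : R) : Rabs x <= e -> -e <= x <= e.
Proof. move=> H; split_Rabs; lra. Qed.

Lemma key n (G : vec n -> Prop) (f : vec n -> R) (gradf : vec n -> vec n)
  (HGopen : vopen_set G) (HGconv : vconvex_set G)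
  (Hgr : forall x, G x -> has_gradient_at G f x (gradf x)) (Hqc : quasiconvex_on G f)
  (xbar x : vec n) (t : R) (Gxbar : G xbar) (Gx : G x)
  (Gxt : G (vadd xbar (vscale t (vsub x xbar))))
  (Hgrad0 : gradf xbar = vzero)
  (H1 : f xbar <= f (vadd xbar (vscale t (vsub x xbar)))) (H2 : f x <= f xbar)
  (Ht : 0 <= t < 1) :
  gradf (vadd xbar (vscale t (vsub x xbar))) = vzero.
Proof.
set xt := vadd xbar (vscale t (vsub x xbar)) in Gxt H1 *.
set g := gradf xt.
have [HN|HN] := Req_dec (dot g g) 0; first exact: dot_eq0.
have N0 := dot_ge0 g.
have Npos : 0 < dot g g by lra.
set N := dot g g in N0 Npos HN.
have sNpos : 0 < sqrt N by apply: sqrt_lt_R0.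
have sNN : sqrt N * sqrt N = N by apply: sqrt_sqrt.
set sN := sqrt N in sNpos sNN.
have [d0 [d0pos Hd0]] := HGopen xbar Gxbar.
have e1pos : 0 < (1 - t) * sN / 4 by apply: Rdiv_lt_0_compat; [nra|lra].
have [d1 [d1pos Hd1]] := Hgr xbar Gxbar _ e1pos.
have e2pos : 0 < sN / 4 by lra.
have [d2 [d2pos Hd2]] := Hgr xt Gxt _ e2pos.
set m := Rmin d0 (Rmin d1 d2).
have mpos : 0 < m by apply: Rmin_pos => //; apply: Rmin_pos.
have m0 : m <= d0 by apply: Rmin_l.
have m1 : m <= d1 by apply: (Rle_trans _ _ _ (Rmin_r _ _)); apply: Rmin_l.
have m2 : m <= d2 by apply: (Rle_trans _ _ _ (Rmin_r _ _)); apply: Rmin_r.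
set h := m / (2 * sN).
have hpos : 0 < h by apply: Rdiv_lt_0_compat; lra.
have hsN : h * sN = m / 2 by rewrite /h; field; lra.
set p := vadd xbar (vscale h g).
have Ep : vsub p xbar = vscale h g.
  by apply: functional_extensionality => i; rewrite /p /vsub /vadd /vscale; ring.
have Np : vnorm (vsub p xbar) = h * sN.
  by rewrite Ep vnorm_scale Rabs_pos_eq; [|lra].
have Gp : G p by apply: Hd0; rewrite Np; lra.
set q := vadd p (vscale t (vsub x p)).
have Gq : G q by apply: HGconv => //; lra.
have Hq : f q <= Rmax (f p) (f x) by apply: Hqc => //; lra.
have Eq : vsub q xt = vscale ((1 - t) * h) g.
  by apply: functional_extensionality => i; rewrite /q /p /xt /vsub /vadd /vscale; ring.
have Nq : vnorm (vsub q xt) = (1 - t) * h * sN.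
  by rewrite Eq vnorm_scale Rabs_pos_eq; [|nra].
have A1 := Hd1 p Gp ltac:(rewrite Np; lra).
rewrite Hgrad0 dot_zero_l Np in A1.
have A2 := Hd2 q Gq ltac:(rewrite Nq; nra).
rewrite Nq Eq dot_scale_r in A2.
rewrite -/g -/N in A2.
have [B1 _] := myabs_inv _ A1.
have [_ B2] := myabs_inv _ A1.
have [C1 _] := myabs_inv _ A2.
have Hmax : Rmax (f p) (f x) <= f xbar + (1 - t) * h * N / 4.
  apply: Rmax_lub.
  - have : (1 - t) * sN / 4 * (h * sN) = (1 - t) * h * N / 4.
      by rewrite -sNN; field.
    lra.
  - have : 0 <= (1 - t) * h * N by apply: Rmult_le_pos; nra.
    lra.
have E2 : sN / 4 * ((1 - t) * h * sN) = (1 - t) * h * N / 4.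
  by rewrite -sNN; field.
have K : 0 < (1 - t) * h * N by apply: Rmult_lt_0_compat; nra.
lra.
Qed.

Theorem theorem2 (n : nat) (G S : vec n -> Prop) (f : vec n -> R) (gradf : vec n -> vec n)
  (HGopen : vopen_set G) (HGconv : vconvex_set G)
  (HSsub : forall x, S x -> G x) (HSne : exists x, S x) (HSconv : vconvex_set S)
  (Hf : C1_on G f gradf) (Hqc : quasiconvex_on G f)
  (xbar : vec n) (Hxbar : argmin_set S f xbar) (Hgrad0 : gradf xbar = vzero) :
  (forall x, argmin_set S f x -> gradf x = vzero) /\
  ((forall x, S x -> ~ argmin_set S f x -> pseudoconvex_at G f gradf x) ->
   forall x, argmin_set S f x <-> (S x /\ gradf x = vzero)).
Proof.
have [Hgr Hcont] := Hf.
have [Sxbar Hminbar] := Hxbar.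
have part1 : forall x, argmin_set S f x -> gradf x = vzero.
  move=> x [Sx Hminx].
  set gx := gradf x.
  have Hsmall : forall eps, 0 < eps -> vnorm gx < eps.
    move=> eps epspos.
    have [d3 [d3pos Hd3]] := Hcont x (HSsub _ Sx) eps epspos.
    set D := vnorm (vsub xbar x).
    have D0 : 0 <= D by apply: vnorm_ge0.
    set s := Rmin (1/2) (d3 / (2 * (D + 1))).
    have spos : 0 < s by apply: Rmin_pos; [lra| apply: Rdiv_lt_0_compat; lra].
    have s1 : s <= 1/2 by apply: Rmin_l.
    have s2 : s <= d3 / (2 * (D + 1)) by apply: Rmin_r.
    have sD : s * D < d3.
      have : d3 / (2 * (D + 1)) * D < d3.
        apply: (Rmult_lt_reg_r (2 * (D + 1))); first lra.
        have -> : d3 / (2 * (D + 1)) * D * (2 * (D + 1)) = d3 * D by field; lra.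
        nra.
      nra.
    set t := 1 - s.
    have Ht : 0 <= t <= 1 by rewrite /t; lra.
    have Sxt : S (vadd xbar (vscale t (vsub x xbar))) by apply: HSconv.
    have g0 := @key _ G f gradf HGopen HGconv Hgr Hqc xbar x t (HSsub _ Sxbar) (HSsub _ Sx) (HSsub _ Sxt)
      Hgrad0 (Hminbar _ Sxt) (Hminx _ Sxbar) ltac:(rewrite /t; lra).
    have Ext : vsub (vadd xbar (vscale t (vsub x xbar))) x = vscale s (vsub xbar x).
      by apply: functional_extensionality => i; rewrite /t /vsub /vadd /vscale; ring.
    have := Hd3 _ (HSsub _ Sxt) ltac:(rewrite Ext vnorm_scale Rabs_pos_eq -/D; lra).
    rewrite g0.
    have -> : vsub vzero (gradf x) = vscale (-1) (gradf x).
      by apply: functional_extensionality => i; rewrite /vzero /vsub /vscale; ring.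
    rewrite vnorm_scale Rabs_Ropp Rabs_R1 Rmult_1_l //.
  apply: vnorm_eq0.
  have := vnorm_ge0 gx.
  case=> // Hp.
  have := Hsmall _ Hp. lra.
split => // Hpc x; split.
- move=> Hx; split; [exact: Hx.1 | exact: part1].
- move=> [Sx gx0].
  apply: NNPP => Hnot.
  have Hps := Hpc x Sx Hnot.
  have [y [Sy fy]] : exists y, S y /\ f y < f x.
    apply: NNPP => Hne; apply: Hnot; split => // y Sy.
    apply: Rnot_lt_le => Hlt; apply: Hne; by exists y.
  have := Hps xbar (HSsub _ Sxbar) ltac:(have := Hminbar y Sy; lra).
  rewrite gx0 dot_zero_l. lra.
Qed.
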